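(* Let $n\geq1$. The submonoid $\Sigma_n$ of $\mathcal{B}_{n+1}$ is an Ore monoid, and its group of fractions is isomorphic to $\mathcal{B}_{n+1}$ (via the map induced by the inclusion $\Sigma_n\subseteq\mathcal{B}_{n+1}$).
   Context: $\mathcal{B}_{n+1}$ is the braid group on $n+1$ strands with standard Artin generators $\sigma_1,\dots,\sigma_n$; $\Sigma_n$ is its submonoid generated by $\sigma_1,\ \sigma_1\sigma_2,\ \dots,\ \sigma_1\sigma_2\cdots\sigma_n$. An Ore monoid is a monoid that is left- and right-cancellative and in which any two elements admit a common left-multiple (an element $a'a=b'b$). *)

(* Defs.v *)
(* The braid group B_{n+1} is presented by generators
   sigma_1..sigma_n; its elements are represented by words modulo the
   congruence generated by free reduction and the Artin relations. *)
From Stdlib Require Import List Arith.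
Import ListNotations.

(* A letter (i, true) is sigma_i, (i, false) is sigma_i^{-1}. *)
Definition letter := (nat * bool)%type.
Definition word := list letter.

Definition valid (n : nat) (w : word) : Prop :=
  Forall (fun l => 1 <= fst l <= n) w.

Definition sig (i : nat) : letter := (i, true).

Inductive braid_eq (n : nat) : word -> word -> Prop :=
| be_refl : forall w, braid_eq n w w
| be_sym : forall u v, braid_eq n u v -> braid_eq n v u
| be_trans : forall u v w, braid_eq n u v -> braid_eq n v w -> braid_eq n u w
| be_ctx : forall u v w1 w2, braid_eq n w1 w2 ->
    braid_eq n (u ++ w1 ++ v) (u ++ w2 ++ v)
| be_free : forall i b, 1 <= i <= n ->
    braid_eq n [(i, b); (i, negb b)] []
| be_comm : forall i j, 1 <= i <= n -> 1 <= j <= n -> i + 2 <= j ->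
    braid_eq n [sig i; sig j] [sig j; sig i]
| be_braid : forall i, 1 <= i -> i + 1 <= n ->
    braid_eq n [sig i; sig (i+1); sig i] [sig (i+1); sig i; sig (i+1)].

Definition delta (k : nat) : word := map sig (seq 1 k).

Definition in_Sigma (n : nat) (w : word) : Prop :=
  exists ks : list nat, Forall (fun k => 1 <= k <= n) ks /\
    braid_eq n w (concat (map delta ks)).

Definition Sigma_is_Ore (n : nat) : Prop :=
  (forall a b c, in_Sigma n a -> in_Sigma n b -> in_Sigma n c ->
     braid_eq n (c ++ a) (c ++ b) -> braid_eq n a b) /\
  (forall a b c, in_Sigma n a -> in_Sigma n b -> in_Sigma n c ->
     braid_eq n (a ++ c) (b ++ c) -> braid_eq n a b) /\
  (forall a b, in_Sigma n a -> in_Sigma n b ->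
     exists a' b', in_Sigma n a' /\ in_Sigma n b' /\
       braid_eq n (a' ++ a) (b' ++ b)).

Record group := Group {
  gcar :> Type;
  gmul : gcar -> gcar -> gcar;
  gone : gcar;
  ginv : gcar -> gcar;
  gmulA : forall x y z, gmul x (gmul y z) = gmul (gmul x y) z;
  gmul1 : forall x, gmul gone x = x;
  gmulV : forall x, gmul (ginv x) x = gone
}.

Definition Sigma_hom (n : nat) (H : group) (f : word -> H) : Prop :=
  (forall a b, in_Sigma n a -> in_Sigma n b -> braid_eq n a b -> f a = f b) /\
  f [] = gone H /\
  (forall a b, in_Sigma n a -> in_Sigma n b -> f (a ++ b) = gmul H (f a) (f b)).

Definition braid_hom (n : nat) (H : group) (g : word -> H) : Prop :=
  (forall u v, valid n u -> valid n v -> braid_eq n u v -> g u = g v) /\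
  (forall u v, valid n u -> valid n v -> g (u ++ v) = gmul H (g u) (g v)).

(* The inclusion Sigma_n -> B_{n+1} exhibits B_{n+1} as the group of fractions
   (enveloping group) of Sigma_n: universal property. *)
Definition inclusion_is_group_of_fractions (n : nat) : Prop :=
  forall (H : group) (f : word -> H), Sigma_hom n H f ->
    (exists g, braid_hom n H g /\ forall a, in_Sigma n a -> g a = f a) /\
    (forall g1 g2, braid_hom n H g1 -> braid_hom n H g2 ->
       (forall a, in_Sigma n a -> g1 a = f a) ->
       (forall a, in_Sigma n a -> g2 a = f a) ->
       forall u, valid n u -> g1 u = g2 u).

(* Main.v *)
Require Import Defs.
From Stdlib Require Import List Arith Lia Setoid Morphisms Bool.
Import ListNotations.

Section Braid.
Variable n : nat.

Instance be_equiv : Equivalence (braid_eq n).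
Proof. split. intro; apply be_refl. intros x y; apply be_sym. intros x y z; apply be_trans. Qed.

Lemma ctxl w1 w2 v : braid_eq n w1 w2 -> braid_eq n (w1 ++ v) (w2 ++ v).
Proof. intro H. exact (be_ctx n [] v w1 w2 H). Qed.
Lemma ctxr u w1 w2 : braid_eq n w1 w2 -> braid_eq n (u ++ w1) (u ++ w2).
Proof. intro H. pose proof (be_ctx n u [] w1 w2 H) as H'. rewrite !app_nil_r in H'. exact H'. Qed.

Instance app_proper : Proper (braid_eq n ==> braid_eq n ==> braid_eq n) (@app letter).
Proof. intros u u' Hu v v' Hv. transitivity (u' ++ v). apply ctxl; auto. apply ctxr; auto. Qed.

Instance cons_proper l : Proper (braid_eq n ==> braid_eq n) (cons l).
Proof. intros u v H. change (braid_eq n ([l] ++ u) ([l] ++ v)). apply ctxr; auto. Qed.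

Lemma delta_S k : delta (S k) = delta k ++ [sig (S k)].
Proof. unfold delta. rewrite seq_S, map_app. reflexivity. Qed.

Lemma Forall_seq (P : nat -> Prop) a m : (forall x, a <= x < a + m -> P x) -> Forall P (seq a m).
Proof. intro H. apply Forall_forall. intros x Hx. apply in_seq in Hx. apply H; lia. Qed.

Lemma commute_list : forall l j, 1 <= j <= n -> Forall (fun x => 1 <= x /\ x + 2 <= j) l ->
  braid_eq n (map sig l ++ [sig j]) ([sig j] ++ map sig l).
Proof.
  induction l as [|x l IH]; intros j Hj HF; simpl. reflexivity.
  inversion HF; subst.
  change (sig x :: map sig l ++ [sig j]) with ([sig x] ++ (map sig l ++ [sig j])).
  rewrite IH by auto.
  change (braid_eq n ([sig x; sig j] ++ map sig l) ([sig j; sig x] ++ map sig l)).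
  apply ctxl. apply be_comm; lia.
Qed.

Lemma shiftA : forall j k, 1 <= k -> k < j -> j <= n ->
  braid_eq n (delta j ++ [sig k]) ([sig (S k)] ++ delta j).
Proof.
  induction j as [|j IH]; intros k H1 H2 H3. lia.
  rewrite delta_S.
  destruct (Nat.eq_dec k j) as [->|Hne].
  - destruct j as [|p]. lia.
    rewrite delta_S. rewrite <- !app_assoc. simpl.
    transitivity (delta p ++ [sig (S (S p)); sig (S p); sig (S (S p))]).
    { apply ctxr. pose proof (be_braid n (S p)) as B. rewrite Nat.add_1_r in B. apply B; lia. }
    change [sig (S (S p)); sig (S p); sig (S (S p))] with ([sig (S (S p))] ++ [sig (S p); sig (S (S p))]).
    rewrite app_assoc.
    change (sig (S (S p)) :: delta p ++ [sig (S p); sig (S (S p))]) with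
      ([sig (S (S p))] ++ delta p ++ [sig (S p); sig (S (S p))]).
    rewrite (app_assoc [sig (S (S p))]). apply ctxl. apply commute_list. lia.
    apply Forall_seq. intros; lia.
  - rewrite <- app_assoc.
    transitivity (delta j ++ [sig k] ++ [sig (S j)]).
    { apply ctxr. simpl. symmetry. apply be_comm; lia. }
    rewrite app_assoc, (IH k) by lia. rewrite <- app_assoc. reflexivity.
Qed.

Lemma shift : forall m a j, 1 <= a -> a + m <= j -> j <= n ->
  braid_eq n (delta j ++ map sig (seq a m)) (map sig (seq (S a) m) ++ delta j).
Proof.
  induction m as [|m IH]; intros a j H1 H2 H3; simpl.
  rewrite app_nil_r. reflexivity.
  change (sig a :: map sig (seq (S a) m)) with ([sig a] ++ map sig (seq (S a) m)).
  rewrite app_assoc, shiftA by lia. simpl. rewrite IH by lia. reflexivity.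
Qed.

Lemma relR : forall i j, i < j -> j <= n ->
  braid_eq n (delta 1 ++ delta j ++ delta i) (delta (S i) ++ delta j).
Proof.
  intros i j H1 H2. unfold delta at 3. rewrite shift by lia.
  reflexivity.
Qed.

Fixpoint pwr (w : word) (m : nat) : word := match m with 0 => [] | S m => w ++ pwr w m end.

Lemma pwr_add w a b : pwr w (a + b) = pwr w a ++ pwr w b.
Proof. induction a; simpl; auto. rewrite IHa, app_assoc. auto. Qed.

Lemma pwr_S_r w m : pwr w m ++ w = pwr w (S m).
Proof. rewrite <- Nat.add_1_r, pwr_add. simpl. rewrite app_nil_r. auto. Qed.

Definition D := delta n.

Lemma lemB : 1 <= n -> braid_eq n (pwr D 2 ++ [sig n]) ([sig 1] ++ pwr D 2).
Proof.
  intro Hn. simpl. rewrite app_nil_r. unfold D.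
  destruct n as [|p] eqn:En. lia.
  rewrite <- En. 
  assert (E: delta n = delta p ++ [sig n]) by (rewrite En; apply delta_S).
  symmetry.
  rewrite E at 2. rewrite (app_assoc (delta n) (delta p)).
  rewrite (shift p 1 n) by lia. idtac. rewrite <- !app_assoc.
  assert (F: sig 1 :: map sig (seq 2 p) = delta n) by (rewrite En; reflexivity).
  rewrite app_comm_cons, F. reflexivity.
Qed.

Lemma DA_pow : forall t k, 1 <= k -> k + t <= n ->
  braid_eq n (pwr D t ++ [sig k]) ([sig (k + t)] ++ pwr D t).
Proof.
  induction t as [|t IH]; intros k H1 H2; simpl.
  rewrite Nat.add_0_r; reflexivity.
  rewrite <- app_assoc, IH by lia. rewrite app_assoc. unfold D. rewrite shiftA by lia.
  rewrite Nat.add_succ_r. reflexivity.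
Qed.

Definition Z := pwr D (S n).

Lemma Zc : forall k, 1 <= k <= n -> braid_eq n (Z ++ [sig k]) ([sig k] ++ Z).
Proof.
  intros k Hk. unfold Z.
  replace (S n) with ((k - 1 + 2) + (n - k)) by lia.
  rewrite !pwr_add. rewrite <- !app_assoc.
  rewrite (DA_pow (n - k) k) by lia. replace (k + (n - k)) with n by lia.
  rewrite (app_assoc (pwr D 2)), lemB by lia.
  rewrite <- app_assoc, (app_assoc (pwr D (k-1))), DA_pow by lia.
  replace (1 + (k - 1)) with k by lia. rewrite <- !app_assoc. reflexivity.
Qed.

Lemma Zc_list : forall l, Forall (fun k => 1 <= k <= n) l ->
  braid_eq n (Z ++ map sig l) (map sig l ++ Z).
Proof.
  induction l as [|x l IH]; intros HF; simpl. rewrite app_nil_r; reflexivity.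
  inversion HF; subst.
  change (sig x :: map sig l) with ([sig x] ++ map sig l).
  rewrite app_assoc, Zc by auto. rewrite <- app_assoc, IH by auto. reflexivity.
Qed.

Lemma Zc_delta k : k <= n -> braid_eq n (Z ++ delta k) (delta k ++ Z).
Proof. intro. apply Zc_list. apply Forall_seq. intros; lia. Qed.

Lemma Zc_concat : forall ks, Forall (fun k => 1 <= k <= n) ks ->
  braid_eq n (Z ++ concat (map delta ks)) (concat (map delta ks) ++ Z).
Proof.
  induction ks as [|k ks IH]; intros HF; simpl. rewrite app_nil_r; reflexivity.
  inversion HF; subst.
  rewrite app_assoc, Zc_delta by lia. rewrite <- app_assoc, IH by auto.
  rewrite app_assoc. reflexivity.
Qed.

Lemma Sig_nil : in_Sigma n [].
Proof. exists []. split. constructor. simpl. reflexivity. Qed.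

Lemma Sig_app a b : in_Sigma n a -> in_Sigma n b -> in_Sigma n (a ++ b).
Proof.
  intros [ka [Fa Ea]] [kb [Fb Eb]]. exists (ka ++ kb). split.
  apply Forall_app; auto. rewrite map_app, concat_app, Ea, Eb. reflexivity.
Qed.

Lemma Sig_delta k : k <= n -> in_Sigma n (delta k).
Proof.
  intro. destruct k. apply Sig_nil. exists [S k]. split. constructor. lia. constructor.
  simpl. rewrite app_nil_r. reflexivity.
Qed.

Lemma Sig_pwr w m : in_Sigma n w -> in_Sigma n (pwr w m).
Proof. intro H. induction m; simpl. apply Sig_nil. apply Sig_app; auto. Qed.

Lemma Sig_eq a b : braid_eq n a b -> in_Sigma n b -> in_Sigma n a.
Proof. intros H [ks [F E]]. exists ks. split; auto. rewrite H. auto. Qed.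

Lemma left_div_aux : 1 <= n -> forall t, t < n -> exists y, in_Sigma n y /\
  braid_eq n (y ++ delta (n - t)) (pwr D (S t)).
Proof.
  intros Hn. induction t as [|t IH]; intros Ht.
  - exists []. split. apply Sig_nil. simpl. rewrite Nat.sub_0_r, app_nil_r. reflexivity.
  - destruct IH as [y [Hy E]]. lia.
    exists (y ++ delta 1 ++ D). split.
    { apply Sig_app; auto. apply Sig_app; apply Sig_delta; lia. }
    rewrite <- !app_assoc. unfold D at 1. rewrite relR by lia.
    replace (S (n - S t)) with (n - t) by lia. rewrite app_assoc, E.
    unfold D. rewrite pwr_S_r. reflexivity.
Qed.

Lemma left_div : 1 <= n -> forall k, 1 <= k <= n -> exists y, in_Sigma n y /\
  braid_eq n (y ++ delta k) Z.
Proof.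
  intros Hn k Hk. destruct (left_div_aux Hn (n - k)) as [y [Hy E]]. lia.
  replace (n - (n - k)) with k in E by lia.
  exists (pwr D k ++ y). split. apply Sig_app; auto. apply Sig_pwr, Sig_delta; lia.
  rewrite <- app_assoc, E, <- pwr_add. unfold Z. replace (k + S (n - k)) with (S n) by lia.
  reflexivity.
Qed.

Lemma Z_Sig : in_Sigma n Z.
Proof. apply Sig_pwr, Sig_delta; lia. Qed.

Lemma star : 1 <= n -> forall a, in_Sigma n a -> exists a', in_Sigma n a' /\
  exists m, braid_eq n (a' ++ a) (pwr Z m).
Proof.
  intros Hn a [ks [F E]].
  assert (G: exists a', in_Sigma n a' /\ exists m, braid_eq n (a' ++ concat (map delta ks)) (pwr Z m)).
  { clear E. induction ks as [|k ks IH]; simpl.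
    - exists []. split. apply Sig_nil. exists 0. reflexivity.
    - inversion F; subst. destruct IH as [c [Hc [m Em]]]; auto.
      destruct (left_div Hn k) as [y [Hy Ey]]; auto.
      exists (c ++ y). split. apply Sig_app; auto. exists (S m).
      rewrite <- app_assoc, (app_assoc y), Ey, Zc_concat by auto.
      rewrite app_assoc, Em, pwr_S_r. reflexivity. }
  destruct G as [a' [H1 [m H2]]]. exists a'. split; auto. exists m. rewrite E. auto.
Qed.

Definition inv (w : word) : word := rev (map (fun l => (fst l, negb (snd l))) w).

Lemma inv_l : forall w, valid n w -> braid_eq n (inv w ++ w) [].
Proof.
  induction w as [|[i b] w IH]; intros V; simpl. reflexivity.
  inversion V; subst. simpl in *.
  change (inv ((i, b) :: w)) with (inv w ++ [(i, negb b)]).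
  rewrite <- app_assoc. simpl.
  assert (Hf: braid_eq n [(i, negb b); (i,b)] []).
  { destruct b; apply (be_free n i); lia. }
  change ((i, negb b) :: (i, b) :: w) with ([(i, negb b); (i, b)] ++ w).
  rewrite Hf. simpl. auto.
Qed.

Lemma inv_r : forall w, valid n w -> braid_eq n (w ++ inv w) [].
Proof.
  induction w as [|[i b] w IH]; intros V; simpl. reflexivity.
  inversion V; subst. simpl in *.
  change (inv ((i, b) :: w)) with (inv w ++ [(i, negb b)]).
  rewrite app_assoc.   change ((i, b) :: w ++ inv w ++ [(i, negb b)]) with ([(i,b)] ++ (w ++ inv w) ++ [(i, negb b)]).
  rewrite IH by auto. simpl. apply be_free. lia.
Qed.

Lemma valid_app u v : valid n u -> valid n v -> valid n (u ++ v).
Proof. intros; apply Forall_app; auto. Qed.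

Lemma valid_delta k : k <= n -> valid n (delta k).
Proof.
  intro. unfold valid, delta. apply Forall_map. apply Forall_seq. intros; simpl; lia.
Qed.

Lemma valid_concat ks : Forall (fun k => 1 <= k <= n) ks -> valid n (concat (map delta ks)).
Proof.
  induction 1; simpl. constructor. apply valid_app; auto. apply valid_delta; lia.
Qed.

Lemma Ore : 1 <= n -> Sigma_is_Ore n.
Proof.
  intro Hn. split; [|split].
  - intros a b c _ _ [ks [F E]] H.
    pose proof (valid_concat ks F) as V.
    set (C := concat (map delta ks)) in *.
    transitivity (inv C ++ C ++ a). rewrite app_assoc, inv_l by auto. reflexivity.
    transitivity (inv C ++ c ++ a). apply ctxr, ctxl. symmetry; auto.
    rewrite H. rewrite (ctxr (inv C) _ _ (ctxl _ _ b E)). rewrite app_assoc, inv_l by auto. reflexivity.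
  - intros a b c _ _ [ks [F E]] H.
    pose proof (valid_concat ks F) as V.
    set (C := concat (map delta ks)) in *.
    transitivity (a ++ C ++ inv C). rewrite inv_r by auto. rewrite app_nil_r. reflexivity.
    rewrite app_assoc. transitivity ((a ++ c) ++ inv C). apply ctxl, ctxr. symmetry; auto.
    rewrite H. rewrite (ctxl _ _ (inv C) (ctxr b _ _ E)). rewrite <- app_assoc, inv_r by auto. rewrite app_nil_r. reflexivity.
  - intros a b Ha Hb.
    destruct (star Hn a Ha) as [a1 [Ha1 [p Ep]]].
    destruct (star Hn b Hb) as [b1 [Hb1 [q Eq]]].
    exists (pwr Z q ++ a1), (pwr Z p ++ b1). split; [|split].
    apply Sig_app; auto. apply Sig_pwr, Z_Sig.
    apply Sig_app; auto. apply Sig_pwr, Z_Sig.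
    rewrite <- !app_assoc, Ep, Eq, <- !pwr_add, Nat.add_comm. reflexivity.
Qed.
End Braid.

Section Grp.
Variable H : group.
Local Notation "x * y" := (gmul H x y).
Local Notation "x ^-1" := (ginv H x) (at level 3).
Local Notation "1" := (gone H).

Lemma mulrV x : x * x^-1 = 1.
Proof.
  rewrite <- (gmul1 H (x * x^-1)). rewrite <- (gmulV H (x^-1)) at 1.
  rewrite <- gmulA, (gmulA H (x^-1)), gmulV, gmul1. apply gmulV.
Qed.
Lemma mulr1 x : x * 1 = x.
Proof. rewrite <- (gmulV H x), gmulA, mulrV. apply gmul1. Qed.
Lemma mulKV x y : x^-1 * (x * y) = y.
Proof. rewrite gmulA, gmulV. apply gmul1. Qed.
Lemma mulVK x y : x * (x^-1 * y) = y.
Proof. rewrite gmulA, mulrV. apply gmul1. Qed.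
Lemma canl x y z : x * y = x * z -> y = z.
Proof. intro E. rewrite <- (mulKV x y), E. apply mulKV. Qed.
Lemma canr x y z : y * x = z * x -> y = z.
Proof. intro E. rewrite <- (mulr1 y), <- (mulrV x), gmulA, E, <- gmulA, mulrV. apply mulr1. Qed.
Lemma invM x y : (x * y)^-1 = y^-1 * x^-1.
Proof. apply (canl (x * y)). rewrite mulrV, <- gmulA, (gmulA H y), mulrV, gmul1, mulrV. auto. Qed.
Lemma invK x : (x^-1)^-1 = x.
Proof. apply (canl (x^-1)). rewrite mulrV. symmetry. apply gmulV. Qed.
End Grp.

Section Univ.
Variables (n : nat) (H : group) (f : word -> H).
Hypothesis Hf : Sigma_hom n H f.
Local Notation "x * y" := (gmul H x y).
Local Notation "x ^-1" := (ginv H x) (at level 3).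
Local Notation "1" := (gone H).

Let d k := f (delta k).
Definition sg i := (d (i - 1))^-1 * d i.

Lemma d0 : d 0 = 1.
Proof. destruct Hf as [_ [E _]]. exact E. Qed.

Lemma fapp a b : in_Sigma n a -> in_Sigma n b -> f (a ++ b) = f a * f b.
Proof. destruct Hf as [_ [_ E]]. apply E. Qed.

Lemma feq a b : in_Sigma n a -> in_Sigma n b -> braid_eq n a b -> f a = f b.
Proof. destruct Hf as [E _]. apply E. Qed.

Lemma FR i j : i < j -> j <= n -> d 1 * (d j * d i) = d (S i) * d j.
Proof.
  intros H1 H2. unfold d.
  rewrite <- !fapp; try (apply Sig_delta; lia); try (apply Sig_app; apply Sig_delta; lia).
  apply feq. repeat apply Sig_app; apply Sig_delta; lia. repeat apply Sig_app; apply Sig_delta; lia.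
  apply relR; lia.
Qed.

Lemma tele i : 1 <= i -> d (i - 1) * sg i = d i.
Proof. intro. unfold sg. apply mulVK. Qed.

Let e i := (d 1)^-1 * d (S i).

Lemma FR' i j : i < j -> j <= n -> d j * d i = e i * d j.
Proof. intros. unfold e. rewrite <- gmulA, <- FR by lia. symmetry. apply mulKV. Qed.

Lemma S1 i j : 1 <= i -> i < j -> j <= n -> d j * sg i = sg (S i) * d j.
Proof.
  intros H1 H2 H3.
  assert (A : d j * sg i = (e (i-1))^-1 * (d j * d i)).
  { apply (canl H (e (i-1))). rewrite mulVK. unfold sg.
    rewrite gmulA, <- FR' by lia. rewrite <- gmulA, mulVK. reflexivity. }
  rewrite A, FR' by lia. rewrite gmulA. f_equal.
  unfold e, sg. replace (S (i - 1)) with i by lia. rewrite invM, invK.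
  rewrite <- gmulA, mulVK. simpl. rewrite Nat.sub_0_r. reflexivity.
Qed.

Lemma S2 i j : 1 <= i -> i + 2 <= j -> j <= n -> sg i * sg j = sg j * sg i.
Proof.
  intros H1 H2 H3.
  assert (A : sg i * (d (j-1))^-1 = (d (j-1))^-1 * sg (S i)).
  { apply (canl H (d (j-1))). rewrite mulVK, gmulA, S1 by lia.
    rewrite <- gmulA, mulrV. apply mulr1. }
  unfold sg at 2 4. rewrite gmulA, A, <- gmulA, <- S1 by lia. apply gmulA.
Qed.

Lemma S3 : forall m k, m + 2 <= k -> k <= n -> d m * sg k = sg k * d m.
Proof.
  induction m as [|m IH]; intros k H1 H2.
  rewrite d0, gmul1. symmetry. apply mulr1.
  rewrite <- (tele (S m)) by lia. replace (S m - 1) with m by lia.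
  rewrite <- gmulA, (S2 (S m) k) by lia. rewrite gmulA, IH by lia. symmetry; apply gmulA.
Qed.

Lemma S4 i : 1 <= i -> i + 1 <= n -> sg i * (sg (S i) * sg i) = sg (S i) * (sg i * sg (S i)).
Proof.
  intros H1 H2.
  pose proof (S1 i (S i) H1 ltac:(lia) ltac:(lia)) as B.
  assert (E : d (S i) = (d (i-1) * sg i) * sg (S i)).
  { rewrite tele by lia. rewrite <- (tele (S i)) by lia. f_equal. f_equal. lia. }
  rewrite E in B.
  apply (canl H (d (i-1))).
  transitivity (((d (i-1) * sg i) * sg (S i)) * sg i). rewrite !gmulA. reflexivity.
  rewrite B. rewrite !gmulA. rewrite <- (S3 (i-1) (S i)) by lia. reflexivity.
Qed.

Definition gl (l : letter) : H :=
  if (1 <=? fst l) && (fst l <=? n) then (if snd l then sg (fst l) else (sg (fst l))^-1) else 1.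
Definition g (w : word) : H := fold_right (fun l acc => gl l * acc) 1 w.

Lemma g_app u v : g (u ++ v) = g u * g v.
Proof. induction u; simpl. symmetry; apply gmul1. rewrite IHu. apply gmulA. Qed.

Lemma gl_valid i b : 1 <= i <= n -> gl (i, b) = if b then sg i else (sg i)^-1.
Proof.
  intro. unfold gl. cbn [fst snd].
  assert (A: (1 <=? i) = true) by (apply Nat.leb_le; lia).
  assert (B: (i <=? n) = true) by (apply Nat.leb_le; lia).
  rewrite A, B. reflexivity.
Qed.

Lemma g_resp u v : braid_eq n u v -> g u = g v.
Proof.
  induction 1.
  - reflexivity.
  - auto.
  - congruence.
  - rewrite !g_app. congruence.
  - simpl. rewrite !gl_valid by lia. destruct b; simpl; rewrite mulr1.
    apply mulrV. apply gmulV.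
  - simpl. unfold sig. rewrite !gl_valid by lia. rewrite !mulr1. apply S2; lia.
  - simpl. unfold sig. rewrite !gl_valid by lia. rewrite !mulr1.
    replace (i + 1) with (S i) by lia. apply S4; lia.
Qed.

Lemma g_delta k : k <= n -> g (delta k) = d k.
Proof.
  induction k; intros Hk. simpl. symmetry; apply d0.
  rewrite delta_S, g_app, IHk by lia. simpl. unfold sig. rewrite gl_valid by lia.
  rewrite mulr1. rewrite <- (tele (S k)) by lia. f_equal. f_equal. lia.
Qed.

Lemma g_concat ks : Forall (fun k => 1 <= k <= n) ks ->
  g (concat (map delta ks)) = f (concat (map delta ks)).
Proof.
  induction 1; simpl.
  - destruct Hf as [_ [E _]]. symmetry; exact E.
  - rewrite g_app, fapp, IHForall, g_delta; try lia; try (apply Sig_delta; lia).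
    reflexivity. exists l. split; auto. apply be_refl.
Qed.

Lemma g_ext : exists g0, braid_hom n H g0 /\ forall a, in_Sigma n a -> g0 a = f a.
Proof.
  exists g. split. split. intros; apply g_resp; auto. intros; apply g_app.
  intros a Ha. pose proof Ha as [ks [F E]].
  rewrite (g_resp _ _ E), g_concat by auto. symmetry. apply feq; auto.
  exists ks; split; auto; apply be_refl.
Qed.
End Univ.

Lemma uniq_ext n (H : group) (f : word -> H) g1 g2 :
  braid_hom n H g1 -> braid_hom n H g2 ->
  (forall a, in_Sigma n a -> g1 a = f a) ->
  (forall a, in_Sigma n a -> g2 a = f a) ->
  forall u, valid n u -> g1 u = g2 u.
Proof.
  intros [E1 A1] [E2 A2] F1 F2.
  assert (Ht : forall i, 1 <= i <= n -> g1 [(i, true)] = g2 [(i, true)]).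
  { intros i Hi.
    assert (V : valid n (delta (i - 1))) by (apply valid_delta; lia).
    assert (V1 : valid n [(i, true)]) by (constructor; simpl; [lia | constructor]).
    pose proof (delta_S (i - 1)) as Ed. replace (S (i - 1)) with i in Ed by lia.
    assert (G : g1 (delta (i-1) ++ [(i,true)]) = g2 (delta (i-1) ++ [(i,true)])).
    { change [(i, true)] with [sig i]. rewrite <- Ed.
      rewrite F1, F2 by (apply Sig_delta; lia). reflexivity. }
    rewrite A1, A2, F1, F2 in G by (auto; apply Sig_delta; lia).
    apply canl in G. exact G. }
  assert (Hl : forall l, valid n [l] -> g1 [l] = g2 [l]).
  { intros [i b] V. inversion V; subst. simpl in *.
    destruct b. apply Ht; auto.
    assert (V1 : valid n [(i, true)]) by (constructor; simpl; [lia | constructor]).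
    assert (B : braid_eq n ([(i, false)] ++ [(i, true)]) []) by (apply (be_free n i false); lia).
    assert (G : g1 ([(i, false)] ++ [(i, true)]) = g2 ([(i, false)] ++ [(i, true)])).
    { rewrite (E1 _ [] ), (E2 _ []); auto; try (apply valid_app; auto); try constructor.
      rewrite F1, F2; auto; apply Sig_nil. }
    rewrite A1, A2, (Ht i) in G by auto. apply canr in G. exact G. }
  induction u as [|l u IH]; intros V.
  - rewrite F1, F2; auto; apply Sig_nil.
  - inversion V; subst. change (l :: u) with ([l] ++ u).
    assert (Vl : valid n [l]) by (constructor; auto).
    rewrite A1, A2 by auto. rewrite Hl, IH; auto.
Qed.

Theorem proposition5p5 (n : nat) (hn : 1 <= n) :
  Sigma_is_Ore n /\ inclusion_is_group_of_fractions n.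
Proof.
  split. apply Ore; auto.
  intros H f Hf. split. apply (g_ext n H f Hf).
  intros g1 g2 B1 B2 F1 F2. apply (uniq_ext n H f); auto.
Qed.
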